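(* Let $0<q<\tfrac13$, $\lambda>1$, $\Theta=(1/q)^{1/\lambda}$, and let $(\mathcal{Q}_n)_{n\in\mathbb{N}^+}$ be a sequence with $\mathcal{Q}_n\in10\mathbb{N}^+$, $\mathcal{Q}_{n+1}/\mathcal{Q}_n\in10\mathbb{N}^+$ for all $n$, and $\ell_1\exp(\Theta^n)\le\mathcal{Q}_n\le\ell_2\exp(\Theta^n)$ for some constants $0<\ell_1\le\ell_2$. Define \[ \mathscr{P}_{\mathscr{H}}(x_1,x_2,y_1,y_2)=\sum_{n=1}^\infty\frac{q^n}{\mathcal{Q}_n^6}\sin(\pi\mathcal{Q}_nx_1)+\sum_{n=1}^\infty\frac{q^n}{\mathcal{Q}_n^6}\sin(\pi\mathcal{Q}_ny_2). \] Then $\mathscr{P}_{\mathscr{H}}\in C^6(\mathbb{R}^4)$, and all its partial derivatives of order $6$ are $\lambda$-Logarithmic Hölder continuous: there are $C>0$ and $h_0\in(0,1)$ such that $|\partial^\alpha\mathscr{P}_{\mathscr{H}}(z+h)-\partial^\alpha\mathscr{P}_{\mathscr{H}}(z)|\le C(-\ln|h|)^{-\lambda}$ for all $|\alpha|=6$, $z\in\mathbb{R}^4$ and $0<|h|\le h_0$. However, the $6$-th order derivatives are nowhere Hölder continuous; more precisely, for $\mathscr{P}(x):=\sum_{n=1}^\infty q^n\sin(\pi\mathcal{Q}_nx)$ (so that $\partial_{x_1}^6\mathscr{P}_{\mathscr{H}}=-\pi^6\mathscr{P}(x_1)$), for every $x\in\mathbb{R}$ and every $\alpha\in(0,1)$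 there is a sequence $\upsilon_m\to0$, $\upsilon_m\ne0$, with \[ \lim_{m\to\infty}\frac{|\mathscr{P}(x+\upsilon_m)-\mathscr{P}(x)|}{|\upsilon_m|^\alpha}=+\infty. \]
   Context: $|\cdot|$ is the sup-norm on $\mathbb{R}^4$. *)

(* Defs.v *)
From Stdlib Require Import Reals Lra List.
From Coquelicot Require Import Coquelicot.
Open Scope R_scope.

(* Points of R^4, written (x1, x2, y1, y2) as a left-nested tuple. *)
Definition pt4 : Type := (R * R * R * R)%type.

Definition coord (p : pt4) (i : nat) : R :=
  match p with (a, b, c, d) =>
    match i with 0%nat => a | 1%nat => b | 2%nat => c | _ => d end end.

Definition upd (p : pt4) (i : nat) (t : R) : pt4 :=
  match p with (a, b, c, d) =>
    match i with
    | 0%nat => (t, b, c, d) | 1%nat => (a, t, c, d)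
    | 2%nat => (a, b, t, d) | _ => (a, b, c, t) end end.

Definition add4 (p h : pt4) : pt4 :=
  match p, h with (a, b, c, d), (a', b', c', d') =>
    (a + a', b + b', c + c', d + d') end.

Definition supnorm (h : pt4) : R :=
  match h with (a, b, c, d) =>
    Rmax (Rmax (Rabs a) (Rabs b)) (Rmax (Rabs c) (Rabs d)) end.

Definition dist4 (p p' : pt4) : R :=
  match p, p' with (a, b, c, d), (a', b', c', d') =>
    supnorm (a - a', b - b', c - c', d - d') end.

Definition pderiv (i : nat) (f : pt4 -> R) (p : pt4) : R :=
  Derive (fun t => f (upd p i t)) (coord p i).

(* iterated partial derivative along the word w = [i1; ...; ik]:
   d_{i1} d_{i2} ... d_{ik} f.  A multi-index alpha with |alpha| = k
   corresponds to any word of length k with the right letter counts. *)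
Definition iter_pd (w : list nat) (f : pt4 -> R) : pt4 -> R :=
  List.fold_right (fun (i : nat) (g : pt4 -> R) => pderiv i g) f w.

Definition valid_word (w : list nat) : Prop := List.Forall (fun i => (i < 4)%nat) w.

Definition continuous4 (g : pt4 -> R) : Prop :=
  forall p eps, 0 < eps -> exists delta, 0 < delta /\
    forall p', dist4 p' p < delta -> Rabs (g p' - g p) < eps.

Definition C_k4 (k : nat) (f : pt4 -> R) : Prop :=
  (forall w i p, valid_word w -> (length w < k)%nat -> (i < 4)%nat ->
     ex_derive (fun t => iter_pd w f (upd p i t)) (coord p i)) /\
  (forall w, valid_word w -> (length w <= k)%nat -> continuous4 (iter_pd w f)).

Definition series1 (a : nat -> R) : R := Series (fun k => a (S k)).

Definition Pfun (q : R) (Q : nat -> nat) (x : R) : R :=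
  series1 (fun n => q ^ n * sin (PI * INR (Q n) * x)).

Definition PH (q : R) (Q : nat -> nat) (p : pt4) : R :=
  series1 (fun n => q ^ n / INR (Q n) ^ 6 * sin (PI * INR (Q n) * coord p 0)) +
  series1 (fun n => q ^ n / INR (Q n) ^ 6 * sin (PI * INR (Q n) * coord p 3)).

(* Main.v *)
Require Import Defs.
From Stdlib Require Import Reals List Lra Lia Classical FunctionalExtensionality.
From Coquelicot Require Import Coquelicot.
Open Scope R_scope.

Lemma cvu_series (fn : nat -> R -> R) (M : nat -> R) (x : R) :
  (forall n y, Rabs (fn n y) <= M n) -> ex_series M ->
  exists e : posreal, CVU (SP fn) (fun y => Series (fun n => fn n y)) x e.
Proof.
  intros HM HS.
  assert (Hpos : forall n, 0 <= M n).
  { intro n. eapply Rle_trans; [apply Rabs_pos| apply (HM n 0)]. }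
  assert (HS' : ex_series (fun k => Rabs (M k))).
  { eapply ex_series_ext; [|exact HS]. intro n. rewrite Rabs_pos_eq; auto. }
  assert (r0 : 0 < Rabs x + 1) by (pose proof (Rabs_pos x); lra).
  set (r := mkposreal _ r0).
  assert (cvn : CVN_r fn r).
  { exists M. exists (Series (fun k => Rabs (M k))). split.
    - apply is_lim_seq_Reals. eapply is_lim_seq_ext.
      2: apply (Series_correct _ HS'). intro n. apply sum_n_Reals.
    - intros n y _. apply HM. }
  apply (CVN_CVU_r fn r cvn x). simpl. lra.
Qed.

Lemma ex_series_dom (fn : nat -> R -> R) (M : nat -> R) (y : R) :
  (forall n y, Rabs (fn n y) <= M n) -> ex_series M -> ex_series (fun n => fn n y).
Proof. intros HM HS. apply (@ex_series_le R_AbsRing R_CompleteNormedModule _ M); [|exact HS]. intro n. apply HM. Qed.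

Lemma SP_cont (fn : nat -> R -> R) :
  (forall n y, continuity_pt (fn n) y) -> forall N y, continuity_pt (SP fn N) y.
Proof.
  intros H N. induction N; intro y; unfold SP; simpl.
  - apply H.
  - apply (continuity_pt_plus (fun x => sum_f_R0 (fun k => fn k x) N) (fn (S N))).
    apply IHN. apply H.
Qed.

Lemma series_cont (fn : nat -> R -> R) (M : nat -> R) (x : R) :
  (forall n y, continuity_pt (fn n) y) ->
  (forall n y, Rabs (fn n y) <= M n) -> ex_series M ->
  continuity_pt (fun y => Series (fun n => fn n y)) x.
Proof.
  intros Hc HM HS. destruct (cvu_series fn M x HM HS) as [e He].
  apply (CVU_continuity _ _ x e He).
  - intros n y _. apply SP_cont. exact Hc.
  - unfold Boule. rewrite Rminus_diag, Rabs_R0. apply cond_pos.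
Qed.

Lemma SP_deriv (fn fn' : nat -> R -> R) :
  (forall n y, is_derive (fn n) y (fn' n y)) ->
  forall N y, is_derive (SP fn N) y (SP fn' N y).
Proof.
  intros H N. induction N; intro y; unfold SP; simpl.
  - apply H.
  - apply (is_derive_plus (fun x => sum_f_R0 (fun k => fn k x) N) (fn (S N))).
    apply IHN. apply H.
Qed.

Lemma series_derive (fn fn' : nat -> R -> R) (M M' : nat -> R) (x : R) :
  (forall n y, is_derive (fn n) y (fn' n y)) ->
  (forall n y, continuity_pt (fn' n) y) ->
  (forall n y, Rabs (fn n y) <= M n) -> ex_series M ->
  (forall n y, Rabs (fn' n y) <= M' n) -> ex_series M' ->
  is_derive (fun y => Series (fun n => fn n y)) x (Series (fun n => fn' n x)).
Proof.
  intros Hd Hc HM HS HM' HS'.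
  destruct (cvu_series fn' M' x HM' HS') as [e He].
  apply is_derive_Reals.
  apply (Ranalysis5.derivable_pt_lim_CVU (SP fn) (SP fn')
           (fun y => Series (fun n => fn n y)) (fun y => Series (fun n => fn' n y)) x x e).
  - unfold Boule. rewrite Rminus_diag, Rabs_R0. apply cond_pos.
  - intros y n _. apply is_derive_Reals. apply SP_deriv. exact Hd.
  - intros y _. apply is_lim_seq_Reals. eapply is_lim_seq_ext.
    2: apply (Series_correct _ (ex_series_dom fn M y HM HS)). intro n. apply sum_n_Reals.
  - exact He.
  - intros y _. apply (series_cont fn' M'); auto.
Qed.

Definition fterm (a w : nat -> R) (k j : nat) (x : R) : R :=
  a j * w j ^ k * sin (w j * x + INR k * (PI/2)).
Definition G (a w : nat -> R) (k : nat) (x : R) : R := Series (fun j => fterm a w k j x).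

Lemma sin_shift2 (x : R) : sin (x + PI/2) = cos x.
Proof. rewrite sin_plus, sin_PI2, cos_PI2. ring. Qed.

Lemma fterm_deriv a w k j x : is_derive (fterm a w k j) x (fterm a w (S k) j x).
Proof.
  unfold fterm. auto_derive; auto.
  rewrite S_INR. replace (w j * x + (INR k + 1) * (PI / 2)) with
    ((w j * x + INR k * (PI / 2)) + PI/2) by ring.
  rewrite sin_shift2. simpl. ring.
Qed.

Lemma fterm_bound a w k j x : Rabs (fterm a w k j x) <= Rabs (a j * w j ^ k).
Proof.
  unfold fterm. rewrite Rabs_mult. rewrite <- (Rmult_1_r (Rabs (a j * w j ^ k))) at 2.
  apply Rmult_le_compat_l. apply Rabs_pos.
  apply Rabs_le. apply SIN_bound.
Qed.

Lemma fterm_cont a w k j x : continuity_pt (fterm a w k j) x.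
Proof.
  apply derivable_continuous_pt. exists (fterm a w (S k) j x).
  apply is_derive_Reals. apply fterm_deriv.
Qed.

Lemma G_deriv a w k x :
  ex_series (fun j => Rabs (a j * w j ^ k)) ->
  ex_series (fun j => Rabs (a j * w j ^ (S k))) ->
  is_derive (G a w k) x (G a w (S k) x).
Proof.
  intros H1 H2. unfold G.
  apply (series_derive (fun j => fterm a w k j) (fun j => fterm a w (S k) j)
    (fun j => Rabs (a j * w j ^ k)) (fun j => Rabs (a j * w j ^ (S k))) x).
  - intros; apply fterm_deriv.
  - intros; apply fterm_cont.
  - intros; apply fterm_bound.
  - exact H1.
  - intros; apply fterm_bound.
  - exact H2.
Qed.

Lemma G_cont a w k x :
  ex_series (fun j => Rabs (a j * w j ^ k)) -> continuity_pt (G a w k) x.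
Proof.
  intros H1. unfold G.
  apply (series_cont (fun j => fterm a w k j) (fun j => Rabs (a j * w j ^ k)) x).
  - intros; apply fterm_cont.
  - intros; apply fterm_bound.
  - exact H1.
Qed.

Fixpoint aw (c : nat) (w : list nat) : R :=
  match w with nil => 1 | i :: w' => if Nat.eqb i c then aw c w' else 0 end.

Lemma isd_const (c x : R) : is_derive (fun _ : R => c) x 0.
Proof. auto_derive; auto. Qed.

Lemma step (F : nat -> R -> R) k (A B : R) i p :
  (forall x, is_derive (F k) x (F (S k) x)) -> (i < 4)%nat ->
  is_derive (fun t => A * F k (coord (upd p i t) 0) + B * F k (coord (upd p i t) 3))
    (coord p i)
    ((if Nat.eqb i 0 then A else 0) * F (S k) (coord p 0) +
     (if Nat.eqb i 3 then B else 0) * F (S k) (coord p 3)).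
Proof.
  intros HF Hi. destruct p as [[[a b] c] d].
  destruct i as [|[|[|[|i]]]]; simpl; try lia.
  - replace (A * F (S k) a + 0 * F (S k) d) with (A * F (S k) a + 0) by ring.
    apply (is_derive_plus (fun t => A * F k t) (fun _ => B * F k d)).
    apply is_derive_scal. apply HF. apply isd_const.
  - replace (0 * F (S k) a + 0 * F (S k) d) with 0 by ring. apply isd_const.
  - replace (0 * F (S k) a + 0 * F (S k) d) with 0 by ring. apply isd_const.
  - replace (0 * F (S k) a + B * F (S k) d) with (0 + B * F (S k) d) by ring.
    apply (is_derive_plus (fun _ => A * F k a) (fun t => B * F k t)).
    apply isd_const. apply is_derive_scal. apply HF.
Qed.

Lemma iter_form (f : pt4 -> R) (F : nat -> R -> R) :
  (forall k x, (k <= 5)%nat -> is_derive (F k) x (F (S k) x)) ->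
  (forall p, f p = F 0%nat (coord p 0) + F 0%nat (coord p 3)) ->
  forall w, valid_word w -> (length w <= 6)%nat ->
  forall p, iter_pd w f p = aw 0 w * F (length w) (coord p 0) + aw 3 w * F (length w) (coord p 3).
Proof.
  intros HF Hf. induction w as [|i w IH]; intros Hv Hl p.
  - simpl. rewrite Hf. ring.
  - inversion Hv as [|i' w' Hi Hw]; subst. simpl in Hl.
    simpl iter_pd. unfold pderiv.
    rewrite (Derive_ext _ (fun t => aw 0 w * F (length w) (coord (upd p i t) 0) +
                                    aw 3 w * F (length w) (coord (upd p i t) 3))).
    2: { intro t. apply IH; auto; lia. }
    assert (Hk : (length w <= 5)%nat) by lia.
    assert (Hs := step F (length w) (aw 0 w) (aw 3 w) i p (fun x => HF _ x Hk) Hi).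
    apply is_derive_unique. simpl length. simpl aw.
    destruct (Nat.eqb i 0), (Nat.eqb i 3); exact Hs.
Qed.

Lemma ck_part1 (f : pt4 -> R) (F : nat -> R -> R) :
  (forall k x, (k <= 5)%nat -> is_derive (F k) x (F (S k) x)) ->
  (forall p, f p = F 0%nat (coord p 0) + F 0%nat (coord p 3)) ->
  forall w i p, valid_word w -> (length w < 6)%nat -> (i < 4)%nat ->
     ex_derive (fun t => iter_pd w f (upd p i t)) (coord p i).
Proof.
  intros HF Hf w i p Hv Hl Hi.
  eapply ex_derive_ext.
  { intro t. symmetry. apply (iter_form f F HF Hf w Hv ltac:(lia)). }
  eexists. apply step; auto. intro x. apply HF. lia.
Qed.

Lemma cont_eps (g : R -> R) x : continuity_pt g x ->
  forall eps, 0 < eps -> exists d, 0 < d /\ forall y, Rabs (y - x) < d -> Rabs (g y - g x) < eps.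
Proof.
  intros H eps He. destruct (H eps He) as [d [Hd H']]. exists d. split; auto.
  intros y Hy. destruct (Req_dec y x) as [->|Hne].
  - rewrite Rminus_diag, Rabs_R0. auto.
  - apply (H' y). unfold D_x, no_cond, R_dist. repeat split; auto.
Qed.

Lemma dist4_coord p' p : Rabs (coord p' 0 - coord p 0) <= dist4 p' p /\
                         Rabs (coord p' 3 - coord p 3) <= dist4 p' p.
Proof.
  destruct p' as [[[a b] c] d]; destruct p as [[[a' b'] c'] d']; cbn [dist4 supnorm coord].
  split.
  - apply Rle_trans with (Rmax (Rabs (a-a')) (Rabs (b-b'))); [apply Rmax_l| apply Rmax_l].
  - apply Rle_trans with (Rmax (Rabs (c-c')) (Rabs (d-d'))); [apply Rmax_r | apply Rmax_r].
Qed.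

Lemma aw_01 c w : aw c w = 0 \/ aw c w = 1.
Proof. induction w; simpl; auto. destruct (Nat.eqb a c); auto. Qed.

Lemma ck_part2 (f : pt4 -> R) (F : nat -> R -> R) :
  (forall k x, (k <= 5)%nat -> is_derive (F k) x (F (S k) x)) ->
  (forall k x, (k <= 6)%nat -> continuity_pt (F k) x) ->
  (forall p, f p = F 0%nat (coord p 0) + F 0%nat (coord p 3)) ->
  forall w, valid_word w -> (length w <= 6)%nat -> continuous4 (iter_pd w f).
Proof.
  intros HF Hc Hf w Hv Hl p eps He.
  destruct (cont_eps _ _ (Hc (length w) (coord p 0) Hl) (eps/2)) as [d1 [Hd1 H1]]; [lra|].
  destruct (cont_eps _ _ (Hc (length w) (coord p 3) Hl) (eps/2)) as [d2 [Hd2 H2]]; [lra|].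
  exists (Rmin d1 d2). split. apply Rmin_pos; auto.
  intros p' Hp'. rewrite !(iter_form f F HF Hf w Hv Hl).
  destruct (dist4_coord p' p) as [E1 E2].
  assert (A1 := H1 (coord p' 0) ltac:(pose proof (Rmin_l d1 d2); lra)).
  assert (A2 := H2 (coord p' 3) ltac:(pose proof (Rmin_r d1 d2); lra)).
  replace (aw 0 w * F (length w) (coord p' 0) + aw 3 w * F (length w) (coord p' 3) -
   (aw 0 w * F (length w) (coord p 0) + aw 3 w * F (length w) (coord p 3))) with
   (aw 0 w * (F (length w) (coord p' 0) - F (length w) (coord p 0)) +
    aw 3 w * (F (length w) (coord p' 3) - F (length w) (coord p 3))) by ring.
  eapply Rle_lt_trans. apply Rabs_triang. rewrite !Rabs_mult.
  destruct (aw_01 0 w) as [-> | ->]; destruct (aw_01 3 w) as [-> | ->];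
  rewrite ?Rabs_R0, ?Rabs_R1; lra.
Qed.

Definition ca (q : R) (Q : nat -> nat) (j : nat) : R := q ^ (S j) / INR (Q (S j)) ^ 6.
Definition cw (Q : nat -> nat) (j : nat) : R := PI * INR (Q (S j)).
Definition FF q Q k x := G (ca q Q) (cw Q) k x.

Lemma PI_ge1 : 1 <= PI.
Proof. pose proof PI_RGT_0. pose proof (PI2_1). lra. Qed.

Lemma coef_bound q Q k j : 0 < q -> (forall j, 1 <= INR (Q (S j))) -> (k <= 6)%nat ->
  Rabs (ca q Q j * cw Q j ^ k) <= PI ^ 6 * q ^ (S j).
Proof.
  intros Hq HQ Hk. unfold ca, cw. specialize (HQ j). set (y := INR (Q (S j))) in *.
  assert (Hy : 0 < y) by lra.
  assert (Hqj : 0 < q ^ S j) by (apply pow_lt; auto).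
  rewrite Rpow_mult_distr.
  assert (E : q ^ S j / y ^ 6 * (PI ^ k * y ^ k) = q ^ S j * PI ^ k * (y ^ k / y ^ 6)).
  { field. lra. }
  rewrite E. rewrite Rabs_pos_eq.
  2: { apply Rmult_le_pos. apply Rmult_le_pos; [lra| apply pow_le; pose proof PI_RGT_0; lra].
       apply Rdiv_le_0_compat. apply pow_le; lra. apply pow_lt; lra. }
  assert (H1 : y ^ k / y ^ 6 <= 1).
  { apply Rcomplements.Rle_div_l. apply pow_lt; lra. rewrite Rmult_1_l. apply Rle_pow; auto. }
  assert (H2 : PI ^ k <= PI ^ 6) by (apply Rle_pow; auto; apply PI_ge1).
  assert (0 <= y ^ k / y ^ 6) by (apply Rdiv_le_0_compat; [apply pow_le | apply pow_lt]; lra).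
  assert (0 <= PI ^ k) by (apply pow_le; pose proof PI_RGT_0; lra).
  rewrite (Rmult_comm (PI^6)). rewrite Rmult_assoc. apply Rmult_le_compat_l. lra.
  replace (PI ^ 6) with (PI ^ 6 * 1) by ring. apply Rmult_le_compat; lra.
Qed.

Lemma ex_series_scal_R (c : R) (a : nat -> R) : ex_series a -> ex_series (fun n => c * a n).
Proof. intro H. exact (@ex_series_scal_l R_AbsRing R_NormedModule c a H). Qed.

Lemma ex_geomS q : 0 < q < 1 -> ex_series (fun j => q ^ S j).
Proof.
  intros Hq. apply (ex_series_ext (fun j => q * q ^ j)). intro; reflexivity.
  apply ex_series_scal_R. apply ex_series_geom. rewrite Rabs_pos_eq; lra.
Qed.

Lemma coef_series q Q k : 0 < q < 1 -> (forall j, 1 <= INR (Q (S j))) -> (k <= 6)%nat ->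
  ex_series (fun j => Rabs (ca q Q j * cw Q j ^ k)).
Proof.
  intros Hq HQ Hk.
  apply (@ex_series_le R_AbsRing R_CompleteNormedModule _ (fun j => PI ^ 6 * q ^ S j)).
  - intro j. change (norm (Rabs (ca q Q j * cw Q j ^ k))) with (Rabs (Rabs (ca q Q j * cw Q j ^ k))).
    rewrite Rabs_Rabsolu. apply coef_bound; auto; lra.
  - apply ex_series_scal_R. apply ex_geomS; auto.
Qed.

Lemma FF_deriv q Q k x : 0 < q < 1 -> (forall j, 1 <= INR (Q (S j))) -> (k <= 5)%nat ->
  is_derive (FF q Q k) x (FF q Q (S k) x).
Proof. intros. apply G_deriv; apply coef_series; auto; lia. Qed.

Lemma FF_cont q Q k x : 0 < q < 1 -> (forall j, 1 <= INR (Q (S j))) -> (k <= 6)%nat ->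
  continuity_pt (FF q Q k) x.
Proof. intros. apply G_cont; apply coef_series; auto. Qed.

Lemma PH_form q Q p : PH q Q p = FF q Q 0 (coord p 0) + FF q Q 0 (coord p 3).
Proof.
  unfold PH, FF, G, series1, fterm, ca, cw. f_equal; apply Series_ext; intro j;
  simpl INR; rewrite Rmult_0_l, Rplus_0_r; simpl pow; ring.
Qed.

Lemma FF6 q Q x : (forall j, 1 <= INR (Q (S j))) -> FF q Q 6 x = - PI ^ 6 * Pfun q Q x.
Proof.
  intros HQ. unfold FF, G, Pfun, series1. rewrite <- Series_scal_l. apply Series_ext. intro j.
  unfold fterm, ca, cw.
  replace (PI * INR (Q (S j)) * x + INR 6 * (PI / 2)) with
      (((PI * INR (Q (S j)) * x + PI) + PI) + PI) by (simpl; field).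
  rewrite !neg_sin. specialize (HQ j). field. lra.
Qed.

Lemma exp_le x y : x <= y -> exp x <= exp y.
Proof. intro H. destruct (Rle_lt_or_eq_dec _ _ H) as [H' | ->]. left; apply exp_increasing; auto. lra. Qed.

Lemma sin_diff_le u v : Rabs (sin u - sin v) <= Rabs (u - v).
Proof.
  destruct (MVT_abs sin cos v u) as [c [Hc _]].
  { intros c _. apply derivable_pt_lim_sin. }
  rewrite Hc. rewrite <- (Rmult_1_l (Rabs (u - v))) at 2.
  apply Rmult_le_compat_r. apply Rabs_pos. apply Rabs_le. apply COS_bound.
Qed.

Lemma sin_diff_le2 u v : Rabs (sin u - sin v) <= 2.
Proof.
  pose proof (SIN_bound u); pose proof (SIN_bound v). apply Rabs_le. lra.
Qed.

Lemma poly_exp (c lam : R) : 0 < c -> exists K, 0 < K /\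
  forall y, 1 <= y -> exp (lam * ln y) <= K * exp (c * y).
Proof.
  intros Hc. destruct (INR_archimed 1 lam ltac:(lra)) as [m Hm]. rewrite Rmult_1_r in Hm.
  assert (Hcm : 0 < c ^ m) by (apply pow_lt; auto).
  assert (Hf : 0 < INR (Factorial.fact m)) by (apply lt_0_INR; apply Factorial.lt_O_fact).
  exists (INR (Factorial.fact m) / c ^ m). split. apply Rdiv_lt_0_compat; auto.
  intros y Hy.
  assert (Hy0 : 0 < y) by lra. assert (Hl : 0 <= ln y) by (rewrite <- ln_1; apply ln_le; lra).
  apply Rle_trans with (exp (INR m * ln y)).
  { apply exp_le. apply Rmult_le_compat_r; lra. }
  change (exp (INR m * ln y)) with (Rpower y (INR m)). rewrite Rpower_pow; auto.
  assert (T : (c * y) ^ m / INR (Factorial.fact m) <= exp (c * y)).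
  { apply Rle_trans with (sum_f_R0 (fun k => (c*y)^k / INR (Factorial.fact k)) m).
    2:{ apply exp_ge_taylor. nra. }
    destruct m. simpl. lra.
    rewrite tech5. assert (0 <= sum_f_R0 (fun k => (c * y) ^ k / INR (Factorial.fact k)) m).
    { apply cond_pos_sum. intro k. apply Rdiv_le_0_compat. apply pow_le. nra.
      apply lt_0_INR; apply Factorial.lt_O_fact. }
    lra. }
  rewrite Rpow_mult_distr in T.
  apply Rcomplements.Rle_div_l in T; auto.
  replace (INR (Factorial.fact m) / c ^ m * exp (c * y)) with ((exp (c * y) * INR (Factorial.fact m)) / c ^ m) by (field; lra).
  apply Rcomplements.Rle_div_r; auto. lra.
Qed.

Definition Pg (q : R) (bb : nat -> R) (x : R) : R :=
  Series (fun j => q ^ S j * sin (PI * bb j * x)).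

Lemma pow_le1 q n : 0 <= q <= 1 -> 0 <= q ^ n <= 1.
Proof. intros Hq. induction n; simpl; nra. Qed.

Lemma ex_series_scal_R' (c : R) (a : nat -> R) : ex_series a -> ex_series (fun n => c * a n).
Proof. intro H. exact (@ex_series_scal_l R_AbsRing R_NormedModule c a H). Qed.

Lemma ex_geomS' q : 0 < q < 1 -> ex_series (fun j => q ^ S j).
Proof.
  intros Hq. apply (ex_series_ext (fun j => q * q ^ j)). intro; reflexivity.
  apply ex_series_scal_R'. apply ex_series_geom. rewrite Rabs_pos_eq; lra.
Qed.

Lemma ex_series_bound (a b : nat -> R) : (forall n, Rabs (a n) <= b n) -> ex_series b -> ex_series a.
Proof. intros H Hb. apply (@ex_series_le R_AbsRing R_CompleteNormedModule _ b); auto. Qed.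

Lemma sum_bb (bb : nat -> R) : (forall j, 0 <= bb j) -> (forall j, 10 * bb j <= bb (S j)) ->
  forall m, sum_f_R0 bb m <= 2 * bb m.
Proof.
  intros H0 H1 m. induction m; simpl. specialize (H0 0%nat); lra.
  specialize (H1 m). specialize (H0 m). lra.
Qed.

Lemma holder_split (q : R) (bb : nat -> R) :
  0 < q < 1/3 -> (forall j, 0 <= bb j) -> (forall j, 10 * bb j <= bb (S j)) ->
  forall M x t, Rabs (Pg q bb (x + t) - Pg q bb x) <= 2 * PI * Rabs t * bb M + 3 * q ^ S M.
Proof.
  intros Hq H0 H1 M x t. unfold Pg.
  assert (Hex : forall y, ex_series (fun j => q ^ S j * sin (PI * bb j * y))).
  { intro y. apply (ex_series_bound _ (fun j => q ^ S j)); [|apply ex_geomS'; lra].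
    intro n. rewrite Rabs_mult. pose proof (pow_le1 q (S n) ltac:(lra)).
    rewrite (Rabs_pos_eq (q ^ S n)) by lra. pose proof (SIN_bound (PI * bb n * y)).
    assert (Rabs (sin (PI * bb n * y)) <= 1) by (apply Rabs_le; lra). nra. }
  rewrite <- Series_minus by auto.
  set (d := fun j => q ^ S j * sin (PI * bb j * (x + t)) - q ^ S j * sin (PI * bb j * x)).
  assert (Hd : forall j, Rabs (d j) <= 2 * q ^ S j).
  { intro j. unfold d. rewrite <- Rmult_minus_distr_l, Rabs_mult.
    pose proof (pow_le1 q (S j) ltac:(lra)). rewrite (Rabs_pos_eq (q ^ S j)) by lra.
    pose proof (sin_diff_le2 (PI * bb j * (x + t)) (PI * bb j * x)). nra. }
  assert (Hd2 : forall j, Rabs (d j) <= PI * Rabs t * bb j).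
  { intro j. unfold d. rewrite <- Rmult_minus_distr_l, Rabs_mult.
    pose proof (pow_le1 q (S j) ltac:(lra)) as Hp. rewrite (Rabs_pos_eq (q ^ S j)) by lra.
    pose proof (sin_diff_le (PI * bb j * (x + t)) (PI * bb j * x)) as H.
    replace (PI * bb j * (x + t) - PI * bb j * x) with (PI * bb j * t) in H by ring.
    rewrite Rabs_mult, Rabs_mult, (Rabs_pos_eq PI), (Rabs_pos_eq (bb j)) in H
      by (auto; pose proof PI_RGT_0; lra).
    pose proof (Rabs_pos (sin (PI * bb j * (x + t)) - sin (PI * bb j * x))). nra. }
  assert (Hexd : ex_series d).
  { apply (ex_series_bound _ (fun j => 2 * q ^ S j)); auto. apply ex_series_scal_R'. apply ex_geomS'; lra. }
  rewrite (Series_incr_n d (S M)) by (auto; lia). simpl pred.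
  eapply Rle_trans. apply Rabs_triang. apply Rplus_le_compat.
  - eapply Rle_trans. apply sum_f_R0_triangle.
    apply Rle_trans with (sum_f_R0 (fun j => bb j * (PI * Rabs t)) M).
    { apply sum_Rle. intros n _. rewrite Rmult_comm. apply Hd2. }
    rewrite <- scal_sum. pose proof (sum_bb bb H0 H1 M).
    assert (0 <= PI * Rabs t) by (pose proof PI_RGT_0; pose proof (Rabs_pos t); nra). nra.
  - assert (Hg : ex_series (fun k => 2 * q ^ S (S M + k))).
    { apply (ex_series_ext (fun k => (2 * q ^ S (S M)) * q ^ k)).
      { intro k. rewrite Rmult_assoc, <- pow_add. reflexivity. }
      apply ex_series_scal_R'. apply ex_series_geom. rewrite Rabs_pos_eq; lra. }
    assert (Hab : ex_series (fun k => Rabs (d (S M + k)%nat))).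
    { apply (ex_series_bound _ (fun k => 2 * q ^ S (S M + k))); auto.
      intro n. rewrite Rabs_Rabsolu. apply Hd. }
    eapply Rle_trans. apply Series_Rabs; auto.
    eapply Rle_trans. apply Series_le; [|exact Hg].
    { intro n. split. apply Rabs_pos. apply Hd. }
    rewrite (Series_ext _ (fun k => (2 * q ^ S (S M)) * q ^ k)).
    2: { intro k. rewrite Rmult_assoc, <- pow_add. reflexivity. }
    rewrite Series_scal_l, Series_geom by (rewrite Rabs_pos_eq; lra).
    replace (q ^ S (S M)) with (q * q ^ S M) by (simpl; ring).
    pose proof (pow_le1 q (S M) ltac:(lra)).
    apply Rcomplements.Rle_div_l. lra. nra.
Qed.

Lemma min_nat (P : nat -> Prop) n : P n -> exists m, P m /\ forall k, (k < m)%nat -> ~ P k.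
Proof.
  intro Hn. apply NNPP. intro Hno.
  assert (A : forall n k, (k <= n)%nat -> ~ P k).
  { induction n0 as [|n0 IH]; intros k Hk Pk.
    - apply Hno. exists k. split; auto. intros k' Hk'. lia.
    - destruct (Nat.le_gt_cases k n0) as [Hk'|Hk'].
      + exact (IH k Hk' Pk).
      + apply Hno. exists k. split; auto. intros k' Hk'' . apply IH. lia. }
  exact (A n n (le_n _) Hn).
Qed.

Lemma find_N (Th z : R) : 1 < Th -> Th <= z ->
  exists N, (1 <= N)%nat /\ Th ^ N <= z < Th ^ S N.
Proof.
  intros HT Hz.
  assert (Hl := is_lim_seq_geom_p Th HT). apply is_lim_seq_spec in Hl.
  destruct (Hl z) as [n0 Hn0].
  destruct (min_nat (fun n => z < Th ^ n) n0 (Hn0 n0 (le_n _))) as [m [Pm Hm]].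
  destruct m as [|[|N]].
  - simpl in Pm. lra.
  - simpl in Pm. lra.
  - exists (S N). split. lia. split; auto.
    apply Rnot_lt_le. apply Hm. lia.
Qed.

Lemma ln_Th q lambda : 0 < q < 1 -> 0 < lambda ->
  lambda * ln (Rpower (1/q) (1/lambda)) = - ln q.
Proof.
  intros Hq Hl. unfold Rpower. rewrite ln_exp.
  unfold Rdiv. rewrite !Rmult_1_l. rewrite ln_Rinv by lra. field. lra.
Qed.

Lemma Th_gt1 q lambda : 0 < q < 1 -> 0 < lambda -> 1 < Rpower (1/q) (1/lambda).
Proof.
  intros Hq Hl. unfold Rpower.
  assert (0 < 1 / lambda * ln (1 / q)).
  { apply Rmult_lt_0_compat. apply Rdiv_lt_0_compat; lra.
    rewrite <- ln_1. apply ln_increasing. lra. apply Rcomplements.Rlt_div_r; lra. }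
  rewrite <- exp_0 at 1. apply exp_increasing. lra.
Qed.

Lemma inv_helper a b K : 0 < a -> 0 < b -> b <= K * a -> / a <= K * / b.
Proof.
  intros Ha Hb H. apply (Rmult_le_reg_r (a * b)). nra.
  replace (/ a * (a * b)) with b by (field; lra).
  replace (K * / b * (a * b)) with (K * a) by (field; lra). lra.
Qed.

Lemma holder_P (q lambda l2 : R) (bb : nat -> R) :
  0 < q < 1/3 -> 1 < lambda -> 0 < l2 ->
  (forall j, 0 <= bb j) -> (forall j, 10 * bb j <= bb (S j)) ->
  (forall j, bb j <= l2 * exp (Rpower (1/q) (1/lambda) ^ S j)) ->
  exists C h0, 0 < C /\ 0 < h0 < 1 /\ forall x t, 0 < Rabs t <= h0 ->
    Rabs (Pg q bb (x + t) - Pg q bb x) <= C * Rpower (- ln (Rabs t)) (- lambda).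
Proof.
  intros Hq Hl Hl2 H0 H1 Hg.
  set (Th := Rpower (1/q) (1/lambda)) in *.
  assert (HT : 1 < Th) by (apply Th_gt1; lra).
  assert (HlT : lambda * ln Th = - ln q) by (apply ln_Th; lra).
  destruct (poly_exp (1/2) lambda ltac:(lra)) as [K [HK HKp]].
  exists (2 * PI * l2 * K + 3 * exp (lambda * (ln 2 + ln Th))), (exp (- (2 * Th + 2))).
  pose proof PI_RGT_0 as HPI.
  split. { pose proof (exp_pos (lambda * (ln 2 + ln Th))). assert (0 < PI * l2 * K) by (apply Rmult_lt_0_compat; [apply Rmult_lt_0_compat|]; lra). nra. }
  split. { split. apply exp_pos. rewrite <- exp_0. apply exp_increasing. lra. }
  intros x t [Ht0 Ht].
  set (L := - ln (Rabs t)).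
  assert (HtL : Rabs t = exp (- L)) by (unfold L; rewrite Ropp_involutive, exp_ln; auto).
  assert (HL : 2 * Th + 2 <= L).
  { unfold L. apply Ropp_le_cancel. rewrite Ropp_involutive.
    rewrite <- (ln_exp (- (2 * Th + 2))). apply ln_le; auto. }
  destruct (find_N Th (L / 2) HT ltac:(lra)) as [N [HN1 [HN2 HN3]]].
  destruct N as [|M]; [lia|].
  pose proof (holder_split q bb Hq H0 H1 M x t) as Hs.
  eapply Rle_trans; [exact Hs|].
  unfold Rpower. set (E := exp (- lambda * ln L)).
  assert (HL1 : 1 <= L) by lra.
  assert (HE : 0 < E) by apply exp_pos.
  assert (T1 : Rabs t * bb M <= l2 * K * E).
  { apply Rle_trans with (exp (- L) * (l2 * exp (L / 2))).
    { rewrite HtL. apply Rmult_le_compat_l. left; apply exp_pos.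
      eapply Rle_trans. apply Hg. apply Rmult_le_compat_l. lra. apply exp_le. exact HN2. }
    assert (X := HKp L HL1).
    replace (exp (- L) * (l2 * exp (L / 2))) with (l2 * exp (- (L / 2))).
    2: { replace (- L) with (- (L/2) + - (L/2)) by field. rewrite exp_plus.
         replace (exp (- (L / 2)) * exp (- (L / 2)) * (l2 * exp (L / 2))) with
           (l2 * exp (- (L / 2)) * (exp (- (L / 2)) * exp (L / 2))) by ring.
         rewrite <- exp_plus. replace (- (L / 2) + L / 2) with 0 by ring. rewrite exp_0. ring. }
    rewrite Rmult_assoc. apply Rmult_le_compat_l. lra.
    unfold E. replace (- lambda * ln L) with (- (lambda * ln L)) by ring.
    rewrite !exp_Ropp. replace (1 / 2 * L) with (L / 2) in X by field.
    apply inv_helper; auto; apply exp_pos. }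
  assert (T2 : q ^ S M <= exp (lambda * (ln 2 + ln Th)) * E).
  { rewrite <- (Rpower_pow (S M) q) by lra. unfold Rpower, E. rewrite <- exp_plus. apply exp_le.
    assert (Hlog : ln (L / 2) < INR (S (S M)) * ln Th).
    { rewrite <- ln_pow by lra. apply ln_increasing; auto. lra. }
    rewrite ln_div in Hlog by lra. rewrite S_INR in Hlog.
    assert (Hlog2 := Rmult_lt_compat_l lambda _ _ ltac:(lra) Hlog).
    replace (lambda * ((INR (S M) + 1) * ln Th)) with ((INR (S M) + 1) * (lambda * ln Th)) in Hlog2 by ring.
    rewrite HlT in Hlog2. lra. }
  assert (0 <= Rabs t) by apply Rabs_pos.
  replace ((2 * PI * l2 * K + 3 * exp (lambda * (ln 2 + ln Th))) * E) with
    (2 * PI * (l2 * K * E) + 3 * (exp (lambda * (ln 2 + ln Th)) * E)) by ring.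
  replace (2 * PI * Rabs t * bb M) with (2 * PI * (Rabs t * bb M)) by ring.
  apply Rplus_le_compat; apply Rmult_le_compat_l; lra.
Qed.

Lemma Series_zero (a : nat -> R) : (forall n, a n = 0) -> Series a = 0.
Proof.
  intro H. rewrite (Series_ext a (fun n => 0 * 0)). rewrite Series_scal_l. ring.
  intro n. rewrite H. ring.
Qed.

Lemma trig_choice th :
  1/4 <= Rabs (sin (th + 2 * PI / 5) - sin th) \/
  1/4 <= Rabs (sin (th + -1 * (2 * PI / 5)) - sin th).
Proof.
  pose proof PI_RGT_0 as HP.
  assert (Hs : 1/2 < sin (2 * PI / 5)).
  { rewrite <- sin_PI6. apply sin_increasing_1; lra. }
  assert (Hc : cos (2 * PI / 5) < 1/2).
  { rewrite <- cos_PI3. apply cos_decreasing_1; lra. }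
  pose proof (COS_bound (2 * PI / 5)). pose proof (SIN_bound (2 * PI / 5)).
  replace (th + -1 * (2 * PI / 5)) with (th - 2 * PI / 5) by ring.
  rewrite sin_plus, sin_minus.
  set (a := 2 * PI / 5) in *. set (S := sin th). set (C := cos th).
  assert (E : S * S + C * C = 1) by (unfold S, C; rewrite <- (sin2_cos2 th); unfold Rsqr; ring).
  destruct (Rle_lt_dec (1/4) (Rabs (S * cos a + C * sin a - S))) as [H1|H1]; [left; auto|].
  destruct (Rle_lt_dec (1/4) (Rabs (S * cos a - C * sin a - S))) as [H2|H2]; [right; auto|].
  exfalso. apply Rabs_def2 in H1. apply Rabs_def2 in H2.
  assert (A1 : - 1/4 < C * sin a < 1/4) by lra.
  assert (A2 : - 1/4 < S * (1 - cos a) < 1/4) by lra.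
  assert (B1 : (C * sin a) * (C * sin a) < 1/16) by nra.
  assert (B2 : (S * (1 - cos a)) * (S * (1 - cos a)) < 1/16) by nra.
  assert (C1 : C * C < 1/4) by nra.
  assert (C2 : S * S < 1/4) by nra.
  lra.
Qed.

Lemma div_chain (Q : nat -> nat) :
  (forall n, (1 <= n)%nat -> exists k, (1 <= k)%nat /\ Q (S n) = (10 * k * Q n)%nat) ->
  forall j k, exists K : nat, INR (Q (S (S j + k))) = 10 * INR K * INR (Q (S j)).
Proof.
  intros H j k. induction k as [|k [K HK]].
  - destruct (H (S j) ltac:(lia)) as [k0 [_ E]]. exists k0. rewrite Nat.add_0_r, E.
    rewrite !mult_INR. simpl. ring.
  - destruct (H (S (S j + k)) ltac:(lia)) as [k1 [_ E]].
    exists (10 * k1 * K)%nat. replace (S (S j + S k)) with (S (S (S j + k))) by lia.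
    rewrite E, !mult_INR, HK. simpl. ring.
Qed.

Lemma lower_bound (q : R) (bb : nat -> R) :
  0 < q < 1 -> (forall j, 0 < bb j) -> (forall j, 10 * bb j <= bb (S j)) ->
  (forall j k, exists K : nat, bb (S j + k)%nat = 10 * INR K * bb j) ->
  forall x m s, (s = 1 \/ s = -1) ->
  q ^ S (S m) * Rabs (sin (PI * bb (S m) * x + s * (2 * PI / 5)) - sin (PI * bb (S m) * x))
    - 4 * PI / 5 * bb m / bb (S m)
  <= Rabs (Pg q bb (x + s * 2 / (5 * bb (S m))) - Pg q bb x).
Proof.
  intros Hq H0 H1 Hdiv x m s Hs. unfold Pg.
  set (v := s * 2 / (5 * bb (S m))).
  assert (H0' : forall j, 0 <= bb j) by (intro j; left; auto).
  assert (Hex : forall y, ex_series (fun j => q ^ S j * sin (PI * bb j * y))).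
  { intro y. apply (ex_series_bound _ (fun j => q ^ S j)); [|apply ex_geomS'; lra].
    intro n. rewrite Rabs_mult. pose proof (pow_le1 q (S n) ltac:(lra)).
    rewrite (Rabs_pos_eq (q ^ S n)) by lra. pose proof (SIN_bound (PI * bb n * y)).
    assert (Rabs (sin (PI * bb n * y)) <= 1) by (apply Rabs_le; lra). nra. }
  rewrite <- Series_minus by auto.
  set (d := fun j => q ^ S j * sin (PI * bb j * (x + v)) - q ^ S j * sin (PI * bb j * x)).
  assert (Hd : forall j, Rabs (d j) <= 2 * q ^ S j).
  { intro j. unfold d. rewrite <- Rmult_minus_distr_l, Rabs_mult.
    pose proof (pow_le1 q (S j) ltac:(lra)). rewrite (Rabs_pos_eq (q ^ S j)) by lra.
    pose proof (sin_diff_le2 (PI * bb j * (x + v)) (PI * bb j * x)). nra. }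
  assert (Hd2 : forall j, Rabs (d j) <= PI * Rabs v * bb j).
  { intro j. unfold d. rewrite <- Rmult_minus_distr_l, Rabs_mult.
    pose proof (pow_le1 q (S j) ltac:(lra)) as Hp. rewrite (Rabs_pos_eq (q ^ S j)) by lra.
    pose proof (sin_diff_le (PI * bb j * (x + v)) (PI * bb j * x)) as H.
    replace (PI * bb j * (x + v) - PI * bb j * x) with (PI * bb j * v) in H by ring.
    rewrite Rabs_mult, Rabs_mult, (Rabs_pos_eq PI), (Rabs_pos_eq (bb j)) in H
      by (auto; pose proof PI_RGT_0; lra).
    pose proof (Rabs_pos (sin (PI * bb j * (x + v)) - sin (PI * bb j * x))). nra. }
  assert (Hexd : ex_series d).
  { apply (ex_series_bound _ (fun j => 2 * q ^ S j)); auto. apply ex_series_scal_R'. apply ex_geomS'; lra. }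
  rewrite (Series_incr_n d (S (S m))) by (auto; lia). simpl pred.
  rewrite (Series_zero (fun k => d (S (S m) + k)%nat)).
  2: { intro k. unfold d. destruct (Hdiv (S m) k) as [K HK]. rewrite HK.
       assert (Hb := H0 (S m)).
       replace (PI * (10 * INR K * bb (S m)) * (x + v)) with
         (PI * (10 * INR K * bb (S m)) * x + s * (2 * INR (2 * K) * PI)).
       2: { unfold v. rewrite mult_INR. simpl INR. field. lra. }
       destruct Hs as [-> | ->].
       - rewrite Rmult_1_l, sin_period. ring.
       - set (th := PI * (10 * INR K * bb (S m)) * x).
         replace th with ((th + -1 * (2 * INR (2 * K) * PI)) + 2 * INR (2 * K) * PI) at 2 by ring.
         rewrite sin_period. ring. }
  rewrite Rplus_0_r, tech5.
  assert (Hlast : d (S m) = q ^ S (S m) * (sin (PI * bb (S m) * x + s * (2 * PI / 5)) - sin (PI * bb (S m) * x))).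
  { unfold d. replace (PI * bb (S m) * (x + v)) with (PI * bb (S m) * x + s * (2 * PI / 5)).
    ring. unfold v. assert (Hb := H0 (S m)). field. lra. }
  rewrite Hlast.
  assert (Hhead : Rabs (sum_f_R0 d m) <= 4 * PI / 5 * bb m / bb (S m)).
  { eapply Rle_trans. apply sum_f_R0_triangle.
    apply Rle_trans with (sum_f_R0 (fun j => bb j * (PI * Rabs v)) m).
    { apply sum_Rle. intros n _. rewrite Rmult_comm. apply Hd2. }
    rewrite <- scal_sum. pose proof (sum_bb bb H0' H1 m).
    assert (Hv : Rabs v = 2 / (5 * bb (S m))).
    { unfold v. assert (Hb := H0 (S m)). unfold Rdiv. rewrite !Rabs_mult.
      rewrite Rabs_inv, (Rabs_pos_eq (5 * bb (S m))) by lra.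
      destruct Hs as [-> | ->]; rewrite ?Rabs_R1, ?Rabs_m1, Rabs_pos_eq by lra; ring. }
    rewrite Hv. assert (Hb := H0 (S m)).
    assert (0 <= PI * (2 / (5 * bb (S m)))).
    { apply Rmult_le_pos. pose proof PI_RGT_0; lra. apply Rdiv_le_0_compat; lra. }
    apply Rle_trans with ((PI * (2 / (5 * bb (S m)))) * (2 * bb m)).
    { apply Rmult_le_compat_l; auto. }
    right. field. lra. }
  pose proof (Rabs_triang_inv (q ^ S (S m) * (sin (PI * bb (S m) * x + s * (2 * PI / 5)) - sin (PI * bb (S m) * x)))
                (- sum_f_R0 d m)) as T.
  rewrite Rabs_Ropp in T. rewrite Rabs_mult, (Rabs_pos_eq (q ^ S (S m))) in T.
  2: { apply pow_le; lra. }
  replace (sum_f_R0 d m + q ^ S (S m) * (sin (PI * bb (S m) * x + s * (2 * PI / 5)) - sin (PI * bb (S m) * x)))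
    with (q ^ S (S m) * (sin (PI * bb (S m) * x + s * (2 * PI / 5)) - sin (PI * bb (S m) * x)) - - sum_f_R0 d m) by ring.
  lra.
Qed.

Lemma absv s b : (s = 1 \/ s = -1) -> 0 < b -> Rabs (s * 2 / (5 * b)) = 2 / (5 * b).
Proof.
  intros Hs Hb. unfold Rdiv. rewrite !Rabs_mult.
  rewrite Rabs_inv, (Rabs_pos_eq (5 * b)) by lra.
  destruct Hs as [-> | ->]; rewrite ?Rabs_R1, ?Rabs_m1, Rabs_pos_eq by lra; ring.
Qed.

Lemma bb_lin (bb : nat -> R) : (forall j, 10 <= bb j) -> (forall j, 10 * bb j <= bb (S j)) ->
  forall j, INR j + 1 <= bb j.
Proof.
  intros H0 H1 j. induction j. simpl. specialize (H0 0%nat). lra.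
  rewrite S_INR. specialize (H1 j). specialize (H0 j). lra.
Qed.

Lemma div_helper a X E R : 0 <= a -> a <= X -> 0 < R -> R <= E -> a / E <= X / R.
Proof.
  intros Ha HX HR HE. unfold Rdiv.
  apply Rmult_le_compat; auto. left; apply Rinv_0_lt_compat; lra.
  apply Rinv_le_contravar; auto.
Qed.

Lemma nowhere (q lambda l1 l2 : R) (bb : nat -> R) :
  0 < q < 1/3 -> 1 < lambda -> 0 < l1 <= l2 ->
  (forall j, 10 <= bb j) -> (forall j, 10 * bb j <= bb (S j)) ->
  (forall j k, exists K : nat, bb (S j + k)%nat = 10 * INR K * bb j) ->
  (forall j, l1 * exp (Rpower (1/q) (1/lambda) ^ S j) <= bb j <= l2 * exp (Rpower (1/q) (1/lambda) ^ S j)) ->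
  forall x alpha, 0 < alpha < 1 -> exists v : nat -> R, (forall m, v m <> 0) /\ is_lim_seq v 0 /\
    is_lim_seq (fun m => Rabs (Pg q bb (x + v m) - Pg q bb x) / Rpower (Rabs (v m)) alpha) p_infty.
Proof.
  intros Hq Hl Hl12 H10 H1 Hdiv Hg x alpha Ha.
  set (Th := Rpower (1/q) (1/lambda)) in *.
  assert (HT : 1 < Th) by (apply Th_gt1; lra).
  assert (HlT : lambda * ln Th = - ln q) by (apply ln_Th; lra).
  assert (H0 : forall j, 0 < bb j) by (intro j; specialize (H10 j); lra).
  set (th := fun m => PI * bb (S m) * x).
  set (sgn := fun m => if Rle_dec (1/4) (Rabs (sin (th m + 2 * PI / 5) - sin (th m))) then 1 else -1).
  assert (Hsgn : forall m, (sgn m = 1 \/ sgn m = -1) /\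
                   1/4 <= Rabs (sin (th m + sgn m * (2 * PI / 5)) - sin (th m))).
  { intro m. unfold sgn. destruct (Rle_dec _ _) as [H|H].
    - split. left; auto. rewrite Rmult_1_l. auto.
    - split. right; auto. destruct (trig_choice (th m)); tauto. }
  exists (fun m => sgn m * 2 / (5 * bb (S m))).
  assert (Hav : forall m, Rabs (sgn m * 2 / (5 * bb (S m))) = 2 / (5 * bb (S m))).
  { intro m. apply absv. apply Hsgn. apply H0. }
  split; [|split].
  - intro m. intro E. assert (E' := Hav m). rewrite E, Rabs_R0 in E'.
    assert (Hb := H0 (S m)). assert (0 < 2 / (5 * bb (S m))) by (apply Rdiv_lt_0_compat; lra). lra.
  - apply is_lim_seq_spec. intro eps.
    destruct (archimed_cor1 eps (cond_pos eps)) as [N [HN HN0]].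
    exists N. intros n Hn. rewrite Rminus_0_r, Hav.
    assert (HbL := bb_lin bb H10 H1 (S n)). rewrite S_INR in HbL.
    assert (HNn : INR N <= INR n) by (apply le_INR; auto).
    assert (HN' : 0 < INR N) by (apply lt_0_INR; auto).
    apply Rle_lt_trans with (/ INR N); [|exact HN].
    apply Rle_trans with (/ bb (S n)).
    + unfold Rdiv. assert (Hb := H0 (S n)). rewrite Rinv_mult.
      rewrite <- Rmult_assoc. rewrite <- (Rmult_1_l (/ bb (S n))) at 2.
      apply Rmult_le_compat_r. left; apply Rinv_0_lt_compat; auto. lra.
    + apply Rinv_le_contravar; auto. lra.
  - apply is_lim_seq_spec. intro M0.
    set (c := 1 - / Th).
    assert (Hc : 0 < c) by (unfold c; assert (/ Th < 1) by (rewrite <- Rinv_1; apply Rinv_lt_contravar; lra); lra).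
    destruct (poly_exp (c/2) lambda ltac:(lra)) as [K1 [HK1 HK1p]].
    destruct (poly_exp (alpha/2) lambda ltac:(lra)) as [K2 [HK2 HK2p]].
    set (B := exp (alpha * ln l1) / (8 * K2)).
    assert (HB : 0 < B) by (unfold B; apply Rdiv_lt_0_compat; [apply exp_pos| lra]).
    set (A1 := 32 * PI / 5 * (l2 / l1) * K1).
    set (Y := 2 * A1 / c + 2 * Rabs M0 / (alpha * B) + 1).
    assert (Hgeo := is_lim_seq_geom_p Th HT). apply is_lim_seq_spec in Hgeo.
    destruct (Hgeo Y) as [N0 HN0].
    exists N0. intros m Hm.
    assert (Hy : Y < Th ^ S (S m)).
    { eapply Rlt_le_trans. apply (HN0 N0 (le_n _)). apply Rle_pow; [lra| lia]. }
    set (y := Th ^ S (S m)) in *.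
    assert (HA1 : 0 < A1).
    { unfold A1. pose proof PI_RGT_0. assert (0 < l2 / l1) by (apply Rdiv_lt_0_compat; lra).
      apply Rmult_lt_0_compat; [apply Rmult_lt_0_compat|]; lra. }
    assert (HY1 : 2 * A1 / c <= Y).
    { unfold Y. assert (0 <= 2 * Rabs M0 / (alpha * B)).
      { apply Rdiv_le_0_compat. pose proof (Rabs_pos M0); lra. nra. } lra. }
    assert (HY2 : 2 * Rabs M0 / (alpha * B) <= Y).
    { unfold Y. assert (0 <= 2 * A1 / c) by (apply Rdiv_le_0_compat; lra). lra. }
    assert (Hy1 : 1 <= y).
    { unfold Y in Hy. assert (0 <= 2 * A1 / c) by (apply Rdiv_le_0_compat; lra).
      assert (0 <= 2 * Rabs M0 / (alpha * B)) by (apply Rdiv_le_0_compat; [pose proof (Rabs_pos M0); lra| nra]). lra. }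
    assert (Hqy : q ^ S (S m) = / exp (lambda * ln y)).
    { rewrite <- exp_Ropp. rewrite <- (Rpower_pow (S (S m)) q) by lra. unfold Rpower, y.
      f_equal. rewrite ln_pow by lra.
      replace (lambda * (INR (S (S m)) * ln Th)) with (INR (S (S m)) * (lambda * ln Th)) by ring.
      rewrite HlT. ring. }
    assert (Hrat : bb m / bb (S m) <= (l2 / l1) * exp (- (c * y))).
    { destruct (Hg m) as [_ Hm2]. destruct (Hg (S m)) as [Hm1 _].
      fold y in Hm1. assert (Hym : Th ^ S m = y / Th) by (unfold y; simpl; field; lra).
      rewrite Hym in Hm2.
      assert (Hb := H0 (S m)).
      apply Rle_trans with (l2 * exp (y / Th) / (l1 * exp y)).
      { unfold Rdiv. apply Rmult_le_compat; auto. left; apply H0.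
        left; apply Rinv_0_lt_compat; auto. apply Rinv_le_contravar; auto.
        apply Rmult_lt_0_compat; [lra| apply exp_pos]. }
      replace (- (c * y)) with (y / Th + - y) by (unfold c; field; lra).
      rewrite exp_plus, exp_Ropp. right. field. split; [apply Rgt_not_eq, exp_pos| lra]. }
    destruct (Hsgn m) as [Hs Hs4].
    assert (LB := lower_bound q bb ltac:(lra) H0 H1 Hdiv x m (sgn m) Hs).
    fold (th m) in LB.
    set (D := Rabs (Pg q bb (x + sgn m * 2 / (5 * bb (S m))) - Pg q bb x)) in *.
    assert (Hsmall : 4 * PI / 5 * (bb m / bb (S m)) <= q ^ S (S m) / 8).
    { set (u := exp (c / 2 * y)).
      assert (Hu : 0 < u) by apply exp_pos.
      assert (HuA : A1 <= u).
      { unfold u. pose proof (exp_ineq1_le (c / 2 * y)).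
        assert (A1 <= c / 2 * y).
        { apply Rle_trans with (c / 2 * (2 * A1 / c)). right; field; lra.
          apply Rmult_le_compat_l; lra. } lra. }
      assert (Hcy : exp (- (c * y)) = / (u * u)).
      { unfold u. rewrite exp_Ropp. f_equal. rewrite <- exp_plus. f_equal. clearbody c y; field. }
      assert (Hq1 : / (K1 * u) <= q ^ S (S m)).
      { rewrite Hqy. apply Rinv_le_contravar. apply exp_pos. apply HK1p; auto. }
      pose proof PI_RGT_0.
      apply Rle_trans with (4 * PI / 5 * ((l2 / l1) * exp (- (c * y)))).
      { apply Rmult_le_compat_l; auto. lra. }
      apply Rle_trans with (/ (K1 * u) / 8); [|lra].
      rewrite Hcy. unfold A1 in HuA.
      apply (Rmult_le_reg_r (8 * K1 * u * u)). apply Rmult_lt_0_compat; [|lra]. nra.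
      replace (4 * PI / 5 * (l2 / l1 * / (u * u)) * (8 * K1 * u * u)) with (32 * PI / 5 * (l2 / l1) * K1) by (field; lra).
      replace (/ (K1 * u) / 8 * (8 * K1 * u * u)) with u by (field; lra). lra. }
    assert (HD : q ^ S (S m) / 8 <= D).
    { assert (X : q ^ S (S m) * (1/4) <= q ^ S (S m) * Rabs (sin (th m + sgn m * (2 * PI / 5)) - sin (th m)))
        by (apply Rmult_le_compat_l; [apply pow_le; lra | exact Hs4]).
      replace (4 * PI / 5 * bb m / bb (S m)) with (4 * PI / 5 * (bb m / bb (S m))) in LB by (unfold Rdiv; ring).
      lra. }
    set (R0 := Rpower (Rabs (sgn m * 2 / (5 * bb (S m)))) alpha).
    assert (HR0 : 0 < R0) by (unfold R0, Rpower; apply exp_pos).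
    assert (HR0E : R0 <= exp (- (alpha * (ln l1 + y)))).
    { unfold R0. rewrite Hav. destruct (Hg (S m)) as [Hm1 _]. fold y in Hm1.
      assert (Hb := H0 (S m)).
      apply Rle_trans with (Rpower (/ (l1 * exp y)) alpha).
      { apply Rle_Rpower_l. lra. split. apply Rdiv_lt_0_compat; lra.
        apply Rle_trans with (/ bb (S m)).
        { unfold Rdiv. rewrite Rinv_mult. rewrite <- Rmult_assoc.
          rewrite <- (Rmult_1_l (/ bb (S m))) at 2.
          apply Rmult_le_compat_r. left; apply Rinv_0_lt_compat; auto. lra. }
        apply Rinv_le_contravar; auto. apply Rmult_lt_0_compat; [lra| apply exp_pos]. }
      unfold Rpower. apply exp_le. rewrite ln_Rinv by (apply Rmult_lt_0_compat; [lra| apply exp_pos]).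
      rewrite ln_mult, ln_exp by (try lra; apply exp_pos). lra. }
    apply Rlt_le_trans with ((q ^ S (S m) / 8) / exp (- (alpha * (ln l1 + y)))).
    2: { apply div_helper; auto. pose proof (pow_le1 q (S (S m)) ltac:(lra)). lra. }
    rewrite Hqy. rewrite exp_Ropp. clearbody y.
    replace (/ exp (lambda * ln y) / 8 / / exp (alpha * (ln l1 + y))) with
      (/ exp (lambda * ln y) / 8 * exp (alpha * (ln l1 + y))) by
      (field; split; apply Rgt_not_eq, exp_pos).
    assert (Hq2 := HK2p y Hy1).
    set (e1 := exp (lambda * ln y)) in *. set (e2 := exp (alpha / 2 * y)) in *.
    assert (He2 : 0 < e2) by apply exp_pos.
    assert (He1 : 0 < e1) by apply exp_pos.
    assert (Eexp : exp (alpha * (ln l1 + y)) = exp (alpha * ln l1) * (e2 * e2)).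
    { unfold e2. rewrite <- !exp_plus. f_equal. field. }
    rewrite Eexp.
    apply Rlt_le_trans with (B * e2).
    + pose proof (exp_ineq1_le (alpha / 2 * y)). fold e2 in H.
      assert (Rabs M0 < B * (alpha / 2 * y)).
      { apply Rle_lt_trans with (B * (alpha / 2 * (2 * Rabs M0 / (alpha * B)))).
        right. field. split; lra.
        apply Rmult_lt_compat_l; auto. apply Rmult_lt_compat_l. lra. lra. }
      pose proof (Rle_abs M0). nra.
    + unfold B. assert (Hl1 : 0 < exp (alpha * ln l1)) by apply exp_pos.
      apply (Rmult_le_reg_r (8 * K2 * e1)). nra.
      replace (exp (alpha * ln l1) / (8 * K2) * e2 * (8 * K2 * e1)) with (exp (alpha * ln l1) * e2 * e1) by (field; lra).
      replace (/ e1 / 8 * (exp (alpha * ln l1) * (e2 * e2)) * (8 * K2 * e1)) with (exp (alpha * ln l1) * e2 * (K2 * e2)) by (field; lra).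
      apply Rmult_le_compat_l. nra. auto.
Qed.

Lemma supnorm_coord h : Rabs (coord h 0) <= supnorm h /\ Rabs (coord h 3) <= supnorm h.
Proof.
  destruct h as [[[a b] c] d]; cbn [supnorm coord].
  split.
  - apply Rle_trans with (Rmax (Rabs a) (Rabs b)); [apply Rmax_l| apply Rmax_l].
  - apply Rle_trans with (Rmax (Rabs c) (Rabs d)); [apply Rmax_r | apply Rmax_r].
Qed.

Lemma add4_coord z h : coord (add4 z h) 0 = coord z 0 + coord h 0 /\
                       coord (add4 z h) 3 = coord z 3 + coord h 3.
Proof. destruct z as [[[a b] c] d]; destruct h as [[[a' b'] c'] d']; simpl; auto. Qed.

Lemma holder_mono (P : R -> R) C h0 lambda :
  0 < C -> 0 < h0 < 1 -> 0 < lambda ->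
  (forall x t, 0 < Rabs t <= h0 -> Rabs (P (x + t) - P x) <= C * Rpower (- ln (Rabs t)) (- lambda)) ->
  forall x t s, Rabs t <= s -> 0 < s <= h0 ->
  Rabs (P (x + t) - P x) <= C * Rpower (- ln s) (- lambda).
Proof.
  intros HC Hh0 Hl HP x t s Hts Hs.
  assert (Hlns : 0 < - ln s).
  { assert (ln s < 0). { rewrite <- ln_1. apply ln_increasing; lra. } lra. }
  assert (0 < Rpower (- ln s) (- lambda)) by (unfold Rpower; apply exp_pos).
  destruct (Req_dec t 0) as [-> | Ht].
  - rewrite Rplus_0_r, Rminus_diag, Rabs_R0. nra.
  - assert (Hta : 0 < Rabs t) by (apply Rabs_pos_lt; auto).
    eapply Rle_trans. apply HP. lra.
    apply Rmult_le_compat_l. lra. unfold Rpower. apply exp_le.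
    assert (- ln s <= - ln (Rabs t)) by (apply Ropp_le_contravar; apply ln_le; lra).
    assert (ln (- ln s) <= ln (- ln (Rabs t))) by (apply ln_le; lra).
    nra.
Qed.

Theorem mainTheorem7 (q lambda l1 l2 : R) (Q : nat -> nat) :
  0 < q < 1 / 3 ->
  1 < lambda ->
  (forall n, (1 <= n)%nat -> exists k, (1 <= k)%nat /\ Q n = (10 * k)%nat) ->
  (forall n, (1 <= n)%nat -> exists k, (1 <= k)%nat /\ Q (S n) = (10 * k * Q n)%nat) ->
  0 < l1 <= l2 ->
  (forall n, (1 <= n)%nat ->
     l1 * exp (Rpower (1 / q) (1 / lambda) ^ n) <= INR (Q n) /\
     INR (Q n) <= l2 * exp (Rpower (1 / q) (1 / lambda) ^ n)) ->
  C_k4 6 (PH q Q) /\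
  (exists C h0, 0 < C /\ 0 < h0 < 1 /\
     forall w z h, valid_word w -> length w = 6%nat ->
       0 < supnorm h <= h0 ->
       Rabs (iter_pd w (PH q Q) (add4 z h) - iter_pd w (PH q Q) z)
         <= C * Rpower (- ln (supnorm h)) (- lambda)) /\
  (forall p, iter_pd (repeat 0%nat 6) (PH q Q) p = - PI ^ 6 * Pfun q Q (coord p 0)) /\
  (forall x alpha, 0 < alpha < 1 ->
     exists v : nat -> R, (forall m, v m <> 0) /\ is_lim_seq v 0 /\
       is_lim_seq (fun m => Rabs (Pfun q Q (x + v m) - Pfun q Q x) / Rpower (Rabs (v m)) alpha)
         p_infty).
Proof.
  intros Hq Hl HQ1 HQ2 Hl12 Hg.
  set (bb := fun j => INR (Q (S j))).
  assert (H10 : forall j, 10 <= bb j).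
  { intro j. destruct (HQ1 (S j) ltac:(lia)) as [k [Hk E]]. unfold bb. rewrite E, mult_INR.
    assert (1 <= INR k) by (apply (le_INR 1); auto). simpl INR at 1. lra. }
  assert (H1 : forall j, 10 * bb j <= bb (S j)).
  { intro j. destruct (HQ2 (S j) ltac:(lia)) as [k [Hk E]]. unfold bb. rewrite E, !mult_INR.
    assert (1 <= INR k) by (apply (le_INR 1); auto).
    assert (0 <= INR (Q (S j))) by apply pos_INR. simpl (INR 10). nra. }
  assert (Hdiv : forall j k, exists K : nat, bb (S j + k)%nat = 10 * INR K * bb j).
  { intros j k. apply (div_chain Q HQ2 j k). }
  assert (Hgr : forall j, l1 * exp (Rpower (1/q) (1/lambda) ^ S j) <= bb j <=
                          l2 * exp (Rpower (1/q) (1/lambda) ^ S j)).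
  { intro j. apply (Hg (S j)). lia. }
  assert (HQ1' : forall j, 1 <= INR (Q (S j))) by (intro j; specialize (H10 j); unfold bb in H10; lra).
  assert (Hq1 : 0 < q < 1) by lra.
  assert (HPg : forall x, Pfun q Q x = Pg q bb x) by (intro x; reflexivity).
  assert (HF : forall k x, (k <= 5)%nat -> is_derive (FF q Q k) x (FF q Q (S k) x)).
  { intros. apply FF_deriv; auto. }
  assert (HC : forall k x, (k <= 6)%nat -> continuity_pt (FF q Q k) x).
  { intros. apply FF_cont; auto. }
  assert (Hf := PH_form q Q).
  split; [|split; [|split]].
  - split. apply (ck_part1 _ _ HF Hf). apply (ck_part2 _ _ HF HC Hf).
  - destruct (holder_P q lambda l2 bb Hq Hl ltac:(lra) ltac:(intro j; specialize (H10 j); lra) H1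
                ltac:(intro j; apply Hgr)) as [C [h0 [HC0 [Hh0 HP]]]].
    exists (2 * PI ^ 6 * C), h0. pose proof PI_RGT_0.
    assert (0 < PI ^ 6) by (apply pow_lt; lra).
    split. nra. split. auto.
    intros w z h Hv Hlen Hh.
    rewrite !(iter_form _ _ HF Hf w Hv ltac:(lia)). rewrite Hlen.
    rewrite !FF6 by auto. rewrite !HPg.
    destruct (add4_coord z h) as [E0 E3]. rewrite E0, E3.
    destruct (supnorm_coord h) as [S0 S3].
    assert (B0 := holder_mono (Pg q bb) C h0 lambda HC0 Hh0 ltac:(lra) HP (coord z 0) (coord h 0) (supnorm h) S0 Hh).
    assert (B3 := holder_mono (Pg q bb) C h0 lambda HC0 Hh0 ltac:(lra) HP (coord z 3) (coord h 3) (supnorm h) S3 Hh).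
    set (D0 := Pg q bb (coord z 0 + coord h 0) - Pg q bb (coord z 0)) in *.
    set (D3 := Pg q bb (coord z 3 + coord h 3) - Pg q bb (coord z 3)) in *.
    replace (aw 0 w * (- PI ^ 6 * Pg q bb (coord z 0 + coord h 0)) + aw 3 w * (- PI ^ 6 * Pg q bb (coord z 3 + coord h 3)) -
      (aw 0 w * (- PI ^ 6 * Pg q bb (coord z 0)) + aw 3 w * (- PI ^ 6 * Pg q bb (coord z 3))))
      with (- PI ^ 6 * (aw 0 w * D0 + aw 3 w * D3)) by (unfold D0, D3; ring).
    rewrite Rabs_mult, Rabs_Ropp, Rabs_pos_eq by lra.
    assert (Rabs (aw 0 w * D0 + aw 3 w * D3) <= Rabs D0 + Rabs D3).
    { eapply Rle_trans. apply Rabs_triang. rewrite !Rabs_mult.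
      destruct (aw_01 0 w) as [-> | ->]; destruct (aw_01 3 w) as [-> | ->];
      rewrite ?Rabs_R0, ?Rabs_R1; pose proof (Rabs_pos D0); pose proof (Rabs_pos D3); lra. }
    nra.
  - intro p. assert (Hv : valid_word (repeat 0%nat 6)).
    { unfold valid_word. simpl. repeat (constructor; [lia|]). constructor. }
    rewrite (iter_form _ _ HF Hf _ Hv ltac:(simpl; lia)).
    simpl length. rewrite !FF6 by auto. simpl aw. ring.
  - intros x alpha Ha.
    exact (nowhere q lambda l1 l2 bb Hq Hl Hl12 H10 H1 Hdiv Hgr x alpha Ha).
Qed.
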